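(* Let $L\subseteq\Sigma^\omega$ be of the form $L=\bigcup_{i=1}^n U_iV_i^\omega$ where each $U_i\subseteq\Sigma^*$ is Parikh-recognizable and each $V_i\subseteq\Sigma^*$ is regular. Then $L$ is LPBA-recognizable.
   Context: For $V\subseteq\Sigma^*$, $V^\omega=\{w_1w_2\cdots\mid w_i\in V\setminus\{\varepsilon\}\}$. A semi-linear set in $\mathbb{N}^d$ (resp. $(\mathbb{N}\cup\{\infty\})^d$) is a finite union of sets $\{b_0+\sum_{j=1}^\ell b_jz_j\mid z_j\in\mathbb{N}\}$ with $b_j\in\mathbb{N}^d$ (resp. $(\mathbb{N}\cup\{\infty\})^d$), with arithmetic $z+\infty=\infty+z=\infty+\infty=\infty$, $z\cdot\infty=\infty\cdot z=\infty$ for $z>0$, $0\cdot\infty=\infty\cdot0=0$. A Parikh automaton (PA) of dimension $d$ is $(Q,\Sigma,q_0,\Delta,F,C)$ with finite $Q$, $q_0\in Q$, $F\subseteq Q$, finite $\Delta\subseteq Q\times\Sigma\times\mathbb{N}^d\times Q$, semi-linear $C\subseteq\mathbb{N}^d$; it accepts a finite word $x_1\cdots x_n$ if there is a run $r_i=(p_{i-1},x_i,\mathbf{v}_i,p_i)\in\Delta$, $p_0=q_0$, with $p_n\in F$ and $\sum_i\mathbf{v}_i\in C$; Parikh-recognizable languages are those accepted by PA. A limit Parikh–Büchi automaton (LPBA) is such a tuple but with $C\subseteq(\mathbb{N}\cup\{\infty\})^d$ semi-linear; a run $r_1r_2\cdots$ on an infinite word ($r_i=(p_{i-1},\alpha_i,\mathbf{v}_i,p_i)$,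 $p_0=q_0$) is accepting if $p_i\in F$ for infinitely many $i$ and $\rho(r)\in C$, where the $j$-th component of $\rho(r)$ is $\infty$ if infinitely many $\mathbf{v}_i$ have nonzero $j$-th component and otherwise is the finite sum of the $j$-th components. $L$ is LPBA-recognizable if it is the set of infinite words with an accepting run of some LPBA. *)

(* Defs.v *)
From mathcomp Require Import all_boot.
Set Implicit Arguments. Unset Strict Implicit. Unset Printing Implicit Defensive.

Definition vec (d : nat) := {ffun 'I_d -> nat}.

Inductive xnat := Fin of nat | Inf.

Definition xadd (x y : xnat) : xnat :=
  match x, y with Fin a, Fin b => Fin (a + b) | _, _ => Inf end.

Definition xscale (z : nat) (x : xnat) : xnat :=
  match x with Fin a => Fin (z * a) | Inf => if z == 0 then Fin 0 else Inf end.

Definition xvec (d : nat) := 'I_d -> xnat.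

Definition semilinear (d : nat) (C : vec d -> Prop) : Prop :=
  exists (m : nat) (l : 'I_m -> nat) (b0 : 'I_m -> vec d)
         (bs : forall i : 'I_m, 'I_(l i) -> vec d),
    forall v : vec d, C v <->
      exists (i : 'I_m) (z : 'I_(l i) -> nat),
        forall j : 'I_d, v j = b0 i j + \sum_(k < l i) z k * bs i k j.

Definition xsemilinear (d : nat) (C : xvec d -> Prop) : Prop :=
  exists (m : nat) (l : 'I_m -> nat) (b0 : 'I_m -> xvec d)
         (bs : forall i : 'I_m, 'I_(l i) -> xvec d),
    forall v : xvec d, C v <->
      exists (i : 'I_m) (z : 'I_(l i) -> nat),
        forall j : 'I_d,
          v j = xadd (b0 i j) (\big[xadd/Fin 0]_(k < l i) xscale (z k) (bs i k j)).

Record PA (Sigma : finType) (d : nat) := {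
  pa_Q : finType;
  pa_q0 : pa_Q;
  pa_delta : seq (pa_Q * Sigma * vec d * pa_Q);
  pa_F : {set pa_Q};
  pa_C : vec d -> Prop;
  pa_C_sl : semilinear pa_C
}.

Definition pa_accepts (Sigma : finType) (d : nat) (A : PA Sigma d)
    (w : seq Sigma) : Prop :=
  exists (p : nat -> pa_Q A) (v : nat -> vec d),
    p 0 = pa_q0 A /\
    (forall i : 'I_(size w),
        (p i, tnth (in_tuple w) i, v i, p i.+1) \in pa_delta A) /\
    p (size w) \in pa_F A /\
    pa_C A [ffun j => \sum_(i < size w) v i j].

Definition parikh_recognizable (Sigma : finType) (U : seq Sigma -> Prop) : Prop :=
  exists (d : nat) (A : PA Sigma d), forall w, U w <-> pa_accepts A w.

Record NFA (Sigma : finType) := {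
  nfa_Q : finType;
  nfa_q0 : nfa_Q;
  nfa_delta : nfa_Q -> Sigma -> nfa_Q -> bool;
  nfa_F : {set nfa_Q}
}.

Definition nfa_accepts (Sigma : finType) (A : NFA Sigma) (w : seq Sigma) : Prop :=
  exists p : nat -> nfa_Q A,
    p 0 = nfa_q0 A /\
    (forall i : 'I_(size w), @nfa_delta _ A (p i) (tnth (in_tuple w) i) (p i.+1)) /\
    p (size w) \in nfa_F A.

Definition regular (Sigma : finType) (V : seq Sigma -> Prop) : Prop :=
  exists A : NFA Sigma, forall w, V w <-> nfa_accepts A w.

Record LPBA (Sigma : finType) (d : nat) := {
  lp_Q : finType;
  lp_q0 : lp_Q;
  lp_delta : seq (lp_Q * Sigma * vec d * lp_Q);
  lp_F : {set lp_Q};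
  lp_C : xvec d -> Prop;
  lp_C_sl : xsemilinear lp_C
}.

(* r is the extended Parikh image rho of the sequence of labels v:
   component j is oo iff infinitely many v i have nonzero j-th component,
   and otherwise is the (finite) sum of the j-th components. *)
Definition is_rho (d : nat) (v : nat -> vec d) (r : xvec d) : Prop :=
  forall j : 'I_d,
    match r j with
    | Inf => forall N, exists i, N <= i /\ v i j <> 0
    | Fin n => exists N, (forall i, N <= i -> v i j = 0) /\
                         n = \sum_(i < N) v i j
    end.

Definition lpba_accepts (Sigma : finType) (d : nat) (A : LPBA Sigma d)
    (alpha : nat -> Sigma) : Prop :=
  exists (p : nat -> lp_Q A) (v : nat -> vec d),
    p 0 = lp_q0 A /\
    (forall i, (p i, alpha i, v i, p i.+1) \in lp_delta A) /\
    (forall N, exists i, N <= i /\ p i \in lp_F A) /\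
    (exists r : xvec d, is_rho v r /\ lp_C A r).

Definition lpba_recognizable (Sigma : finType) (L : (nat -> Sigma) -> Prop) : Prop :=
  exists (d : nat) (A : LPBA Sigma d), forall alpha, L alpha <-> lpba_accepts A alpha.

(* alpha in U V^omega: alpha = u w_0 w_1 ... with u in U, w_k in V \ {eps} *)
Definition in_UVomega (Sigma : finType) (U V : seq Sigma -> Prop)
    (alpha : nat -> Sigma) : Prop :=
  exists (u : seq Sigma) (ws : nat -> seq Sigma),
    U u /\
    (forall k, V (ws k) /\ ws k <> [::]) /\
    (forall t : 'I_(size u), alpha t = tnth (in_tuple u) t) /\
    (forall k (t : 'I_(size (ws k))),
        alpha (size u + \sum_(m < k) size (ws m) + t) = tnth (in_tuple (ws k)) t).

(* Main.v *)
Require Import Defs.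
From mathcomp Require Import all_boot zify.
From Stdlib Require Import ClassicalEpsilon FunctionalExtensionality.
Set Implicit Arguments. Unset Strict Implicit. Unset Printing Implicit Defensive.

Lemma xsl_fin (d : nat) (C : xvec d -> Prop) (T : finType) (l : T -> nat)
  (b0 : T -> xvec d) (bs : forall t, 'I_(l t) -> xvec d) :
  (forall v, C v <-> exists t (z : 'I_(l t) -> nat), forall j,
     v j = xadd (b0 t j) (\big[xadd/Fin 0]_(k < l t) xscale (z k) (bs t k j))) ->
  xsemilinear C.
Proof.
move=> H; exists #|T|, (fun i => l (enum_val i)), (fun i => b0 (enum_val i)),
  (fun i => bs (enum_val i)) => v; split=> [/H [t [z Hz]]|[i [z Hz]]].
- by exists (enum_rank t); rewrite enum_rankK; exists z.
- by apply/H; exists (enum_val i), z.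
Qed.

Lemma bigx_fin L (z f : 'I_L -> nat) :
  \big[xadd/Fin 0]_(k < L) xscale (z k) (Fin (f k)) = Fin (\sum_(k < L) z k * f k).
Proof. by elim/big_rec2: _ => // k a b _ ->. Qed.

Lemma bigx_zero L (z : 'I_L -> nat) :
  \big[xadd/Fin 0]_(k < L) xscale (z k) (Fin 0) = Fin 0.
Proof. by rewrite (bigx_fin z (fun _ => 0)) big1 // => k _; rewrite muln0. Qed.

Lemma sl_xsl d (C : vec d -> Prop) : semilinear C ->
  xsemilinear (fun r => exists c, C c /\ forall j, r j = Fin (c j)).
Proof.
case=> m [l [b0 [bs H]]].
exists m, l, (fun i j => Fin (b0 i j)), (fun i k j => Fin (bs i k j)) => r; split.
- case=> c [/H [i [z Hz]] Hr]; exists i, z => j.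
  by rewrite Hr Hz (bigx_fin z (fun k => bs i k j)).
- case=> i [z Hz]; exists [ffun j => b0 i j + \sum_(k < l i) z k * bs i k j]; split.
  + by apply/H; exists i, z => j; rewrite ffunE.
  + by move=> j; rewrite Hz (bigx_fin z (fun k => bs i k j)) ffunE.
Qed.

Lemma xsl_true : xsemilinear (fun _ : xvec 0 => True).
Proof.
exists 1, (fun _ => 0), (fun _ _ => Fin 0), (fun _ _ _ => Fin 0) => v; split => // _.
by exists ord0, (fun _ => 0) => -[].
Qed.

Definition rho_at (f : nat -> nat) (x : xnat) : Prop :=
  match x with
  | Inf => forall N, exists i, N <= i /\ f i <> 0
  | Fin n => exists N, (forall i, N <= i -> f i = 0) /\ n = \sum_(i < N) f i
  end.

Lemma is_rhoE d (v : nat -> vec d) r : is_rho v r <-> forall j, rho_at (fun i => v i j) (r j).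
Proof. by []. Qed.

Lemma sum_stable (f : nat -> nat) N M : N <= M -> (forall i, N <= i -> f i = 0) ->
  \sum_(i < M) f i = \sum_(i < N) f i.
Proof.
move=> NM Hf; rewrite -!(big_mkord xpredT) (@big_cat_nat _ _ _ N 0 M _ _ (leq0n N) NM) /=.
rewrite [X in _ + X = _]big_nat_cond [X in _ + X = _]big1 ?addn0 // => i /andP[/andP[Hi _] _]; exact: Hf.
Qed.

Lemma rho_at_ext f g x : (forall i, f i = g i) -> rho_at f x -> rho_at g x.
Proof.
move=> E; case: x => [n [N [HN ->]]|H].
- by exists N; split=> [i Hi|]; [rewrite -E; apply: HN | apply: eq_bigr => i _].
- by move=> N; have [i [Hi Hf]] := H N; exists i; rewrite -E.
Qed.

Lemma rho_at_fin f N : (forall i, N <= i -> f i = 0) -> rho_at f (Fin (\sum_(i < N) f i)).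
Proof. by move=> H; exists N. Qed.

Lemma rho_at_uniq f x N : rho_at f x -> (forall i, N <= i -> f i = 0) ->
  x = Fin (\sum_(i < N) f i).
Proof.
case: x => [n [N' [HN' ->]]|H] HN.
- congr Fin; rewrite -(sum_stable (leq_maxl N' N) HN') (sum_stable (leq_maxr N' N) HN) //.
- by have [i [Hi Hf]] := H N; case: Hf; apply: HN.
Qed.



Fixpoint dec (l : nat -> nat) (t : nat) : nat * nat :=
  match t with
  | 0 => (0, 0)
  | t'.+1 => let kk := dec l t' in
             if kk.2.+1 < l kk.1 then (kk.1, kk.2.+1) else (kk.1.+1, 0)
  end.

Section Dec.
Variables (l : nat -> nat) (Hl : forall k, 0 < l k).

Lemma decP t : (dec l t).2 < l (dec l t).1 /\ t = \sum_(m < (dec l t).1) l m + (dec l t).2.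
Proof.
elim: t => [|t IH] /=; first by rewrite big_ord0 Hl.
case: (dec l t) IH => k o /= [IH1 IH2].
case: ifP => H /=.
- by split => //; rewrite IH2 addnS.
- split; first exact: Hl.
  rewrite big_ord_recr /= addn0 IH2 -addnS; congr (_ + _).
  move/negbT: H; rewrite -leqNgt => H; lia.
Qed.

Lemma dec_off t k : dec l t = (k, 0) -> forall o, o < l k -> dec l (t + o) = (k, o).
Proof.
move=> E; elim=> [|o IH] Ho; first by rewrite addn0.
by rewrite addnS /= IH ?(ltnW Ho) //= Ho.
Qed.

Lemma dec_sum k : dec l (\sum_(m < k) l m) = (k, 0).
Proof.
elim: k => [|k IH]; first by rewrite big_ord0.
have Hk := Hl k.
have Hlt : (l k).-1 < l k by rewrite ltn_predL.
have := dec_off IH Hlt.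
have E : (l k).-1.+1 = l k by rewrite prednK.
rewrite big_ord_recr /= -E addnS /= => ->; rewrite /= E ltnn.
by [].
Qed.

Lemma sum_ge k : k <= \sum_(m < k) l m.
Proof.
elim: k => [|k IH] //; rewrite big_ord_recr /= -addn1; apply: leq_add => //.
Qed.

End Dec.


Lemma tnth_mkseq (T : Type) (f : nat -> T) n (i : 'I_(size (mkseq f n))) :
  tnth (in_tuple (mkseq f n)) i = f i.
Proof.
rewrite (tnth_nth (f 0)) /= nth_mkseq //.
by have := ltn_ord i; rewrite {2}size_mkseq.
Qed.

Section Branch.
Variables (Sigma : finType) (d : nat) (A : PA Sigma d) (B : NFA Sigma).
Local Notation Q := (pa_Q A).
Local Notation P := (nfa_Q B).
Local Notation St := (Q + option P)%type.

Definition zv : vec d := [ffun _ => 0].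

Definition step2 (x : option P) (a : Sigma) (y : option P) : bool :=
  [exists p' : P, nfa_delta (odflt (nfa_q0 B) x) a p' &&
     ((y == Some p') || ((y == None) && (p' \in nfa_F B)))].

Definition finstep (s : St) (a : Sigma) (s' : St) : bool :=
  match s, s' with
  | inl q, inr y => (q \in pa_F A) && step2 None a y
  | inr x, inr y => step2 x a y
  | _, _ => false
  end.

Definition bdelta : seq (St * Sigma * vec d * St) :=
  [seq (inl e.1.1.1, e.1.1.2, e.1.2, inl e.2) | e <- pa_delta A] ++
  [seq (e.1.1, e.1.2, zv, e.2) | e <- enum [pred e : St * Sigma * St | finstep e.1.1 e.1.2 e.2]].

Lemma mem_bdelta s a w s' : ((s, a, w, s') \in bdelta) =
  (match s, s' with inl q, inl q' => (q, a, w, q') \in pa_delta A | _, _ => false end)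
  || ((w == zv) && finstep s a s').
Proof.
rewrite mem_cat; congr orb.
- case: s => [q|x]; case: s' => [q'|y].
  + apply/mapP/idP => [[[[[q1 a1] w1] q1'] He [-> -> -> ->]] //|H].
    by exists (q, a, w, q').
  + by apply/mapP => -[[[[q1 a1] w1] q1'] _ []].
  + by apply/mapP => -[[[[q1 a1] w1] q1'] _ []].
  + by apply/mapP => -[[[[q1 a1] w1] q1'] _ []].
- apply/mapP/andP => [[[[s1 a1] s1'] He [-> -> -> ->]]|[/eqP -> H]].
  + by rewrite mem_enum in He.
  + by exists (s, a, s'); rewrite ?mem_enum.
Qed.

Definition Cx (r : xvec d) : Prop := exists c, pa_C A c /\ forall j, r j = Fin (c j).

Definition LB : LPBA Sigma d :=
  {| lp_Q := St; lp_q0 := inl (pa_q0 A); lp_delta := bdelta;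
     lp_F := [set inr None]; lp_C := Cx; lp_C_sl := sl_xsl (pa_C_sl A) |}.


Lemma step2_intro x a y p' : nfa_delta (odflt (nfa_q0 B) x) a p' ->
  (y = Some p' \/ (y = None /\ p' \in nfa_F B)) -> step2 x a y.
Proof.
move=> H1 H2; apply/existsP; exists p'; rewrite H1 /=.
by case: H2 => [->|[-> ->]]; rewrite ?eqxx ?orbT.
Qed.

Lemma branch1 alpha : in_UVomega (pa_accepts A) (nfa_accepts B) alpha -> lpba_accepts LB alpha.
Proof.
case=> u [ws [[p [v [Hp0 [Hpt [HpF HpC]]]]] [Hws [Ha1 Ha2]]]].
pose l k := size (ws k).
have Hl : forall k, 0 < l k.
  by move=> k; rewrite lt0n size_eq0; apply/eqP; case: (Hws k).
have [R HR] : {R : nat -> nat -> P | forall k, R k 0 = nfa_q0 B /\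
   (forall i : 'I_(size (ws k)), nfa_delta (R k i) (tnth (in_tuple (ws k)) i) (R k i.+1)) /\
   R k (size (ws k)) \in nfa_F B}.
  exists (fun k => proj1_sig (constructive_indefinite_description _ (proj1 (Hws k)))).
  by move=> k; exact: (proj2_sig (constructive_indefinite_description _ (proj1 (Hws k)))).
pose st t : St := if t <= size u then inl (p t) else
  if (dec l (t - size u)).2 == 0 then inr None
  else inr (Some (R (dec l (t - size u)).1 (dec l (t - size u)).2)).
pose lab t := if t < size u then v t else zv.
exists st, lab; split; first by rewrite /st leq0n Hp0.
split.
  move=> t; rewrite /= mem_bdelta; case: (ltnP t (size u)) => Ht.
    rewrite /st /lab Ht (ltnW Ht); apply/orP; left.
    by have := Hpt (Ordinal Ht); rewrite /= (Ha1 (Ordinal Ht)).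
  rewrite /lab ltnNge Ht /= eqxx /=.
  have [Ho Hdec] := decP Hl (t - size u).
  move: Ho Hdec; case E: (dec l (t - size u)) => [k o] /= Ho Hdec.
  have Hat : alpha t = tnth (in_tuple (ws k)) (Ordinal Ho).
    by rewrite -Ha2 /= -addnA -Hdec subnKC.
  have Hd := (proj1 (proj2 (HR k))) (Ordinal Ho); rewrite /= -Hat in Hd.
  pose yn := if o.+1 < l k then Some (R k o.+1) else None.
  have Hst1 : st t.+1 = inr yn.
    rewrite /st ltnNge Ht /= subSn // /= E /= /yn.
    by case: (o.+1 < l k).
  have key : forall x, odflt (nfa_q0 B) x = R k o -> step2 x (alpha t) yn.
    move=> x Hx; apply: (step2_intro (p' := R k o.+1)); first by rewrite Hx.
    rewrite /yn; case: ifP => H; [by left | right; split => //].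
    have -> : o.+1 = l k by move/negbT: H; rewrite -leqNgt => H; lia.
    exact: (proj2 (proj2 (HR k))).
  rewrite Hst1; case: (ltnP (size u) t) => Ht2.
    rewrite /st leqNgt Ht2 /= E /=.
    case: eqP => Ho0 /=; apply: key => //=.
    by rewrite Ho0 (proj1 (HR k)).
  have Htu : t = size u by apply/eqP; rewrite eqn_leq Ht Ht2.
  have HpFt : p t \in pa_F A by rewrite Htu.
  rewrite /st Ht2 /= HpFt /=; apply: key => /=.
  move: E; rewrite Htu subnn /= => -[<- <-].
  by rewrite (proj1 (HR 0)).
split.
  move=> N; exists (size u + \sum_(m < N.+1) l m); split.
    have := sum_ge Hl N.+1; lia.
  have Hpos : 0 < \sum_(m < N.+1) l m by have := sum_ge Hl N.+1; lia.
  rewrite /st /= leqNgt -{1}(addn0 (size u)) ltn_add2l Hpos /= addKn dec_sum //=.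
  by rewrite in_set1.
exists (fun j => Fin (\sum_(i < size u) v i j)); split.
  move=> j /=; exists (size u); split.
    by move=> i Hi; rewrite /lab ltnNge Hi /= ffunE.
  by apply: eq_bigr => i _; rewrite /lab ltn_ord.
by exists [ffun j => \sum_(i < size u) v i j]; split => // j; rewrite ffunE.
Qed.


Lemma branch2 alpha : lpba_accepts LB alpha -> in_UVomega (pa_accepts A) (nfa_accepts B) alpha.
Proof.
case=> st [lab [H0 [Ht [HF [r [Hr HC]]]]]].
have F1 : forall t x, st t = inr x ->
    exists y, st t.+1 = inr y /\ lab t = zv /\ step2 x (alpha t) y.
  move=> t x E; have := Ht t; rewrite /= mem_bdelta E.
  case E': (st t.+1) => [q'|y] /=; first by case/andP.
  by case/andP => /eqP -> H; exists y.
have F2 : forall t q, st t = inl q ->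
    (exists q', st t.+1 = inl q' /\ (q, alpha t, lab t, q') \in pa_delta A) \/
    (exists y, st t.+1 = inr y /\ lab t = zv /\ q \in pa_F A /\ step2 None (alpha t) y).
  move=> t q E; have := Ht t; rewrite /= mem_bdelta E.
  case E': (st t.+1) => [q'|y] /=.
    by rewrite andbF orbF => H; left; exists q'.
  by case/andP => /eqP -> /andP [Hq Hs]; right; exists y.
pose isr (s : St) := if s is inr _ then true else false.
have Hex : exists t, isr (st t).
  by have [i [_ Hi]] := HF 0; exists i; move: Hi; rewrite inE => /eqP ->.
have [n0 Hn0 Hmin] := ex_minnP Hex.
have n0pos : 0 < n0.
  by move: Hn0; case: n0 {Hmin} => //; rewrite H0.
pose m := n0.-1.
have Hn0m : n0 = m.+1 by rewrite prednK.
have Hinl : forall t, t <= m -> exists q, st t = inl q.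
  move=> t Htm; case E: (st t) => [q|y]; first by exists q.
  have := Hmin t; rewrite E /= => /(_ isT); lia.
have Hinr : forall t, m < t -> exists y, st t = inr y.
  elim=> // t IH Htm; case: (ltnP m t) => H.
    by have [y Hy] := IH H; have [y' [Hy' _]] := F1 _ _ Hy; exists y'.
  have -> : t.+1 = n0 by lia.
  by move: Hn0; case: (st n0) => // y _; exists y.
have Hlab : forall t, m <= t -> lab t = zv.
  move=> t; rewrite leq_eqVlt => /orP [/eqP <-|H].
    have [q Hq] := Hinl m (leqnn m).
    case: (F2 _ _ Hq) => [[q' [Hq' _]]|[y [_ [-> _]]]] //.
    by have [y Hy] := Hinr m.+1 (ltnSn m); rewrite Hy in Hq'.
  by have [y Hy] := Hinr t H; have [y' [_ [-> _]]] := F1 _ _ Hy.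
have [qm [Hqm [ym [Hym [_ [HqmF Hsm]]]]]] : exists q, st m = inl q /\
    exists y, st m.+1 = inr y /\ lab m = zv /\ q \in pa_F A /\ step2 None (alpha m) y.
  have [q Hq] := Hinl m (leqnn m); exists q; split => //.
  case: (F2 _ _ Hq) => [[q' [Hq' _]]|//].
  by have [y Hy] := Hinr m.+1 (ltnSn m); rewrite Hy in Hq'.
pose u := mkseq alpha m.
have Hu : pa_accepts A u.
  exists (fun t => if st t is inl q then q else pa_q0 A), lab.
  split; first by rewrite H0.
  split.
    move=> i; rewrite tnth_mkseq.
    have Hi : i < m by have := ltn_ord i; rewrite {2}size_mkseq.
    have [q Hq] := Hinl i (ltnW Hi); have [q' Hq'] := Hinl i.+1 Hi.
    rewrite Hq Hq'; case: (F2 _ _ Hq) => [[q'' [Hq'' H]]|[y [Hy _]]].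
      by rewrite Hq' in Hq''; case: Hq'' => ->.
    by rewrite Hq' in Hy.
  split; first by rewrite size_mkseq Hqm.
  have [c [Hc Hrc]] := HC.
  suff -> : [ffun j => \sum_(i < size u) lab i j] = c by [].
  apply/ffunP => j; rewrite ffunE size_mkseq.
  have Hz : forall i, m <= i -> (fun i => lab i j) i = 0.
    by move=> i Hi; rewrite /= Hlab // ffunE.
  have := rho_at_uniq (Hr j) Hz.
  by rewrite Hrc => -[->].
have Hb : forall N, exists t, (N < t) && (st t == inr None).
  move=> N; have [i [Hi Hi']] := HF N.+1; exists i; rewrite Hi /=.
  by move: Hi'; rewrite inE.
pose b := fix b k := if k is k'.+1 then ex_minn (Hb (b k')) else m.
have bS : forall k, b k.+1 = ex_minn (Hb (b k)) by [].
have Pb : forall k, b k < b k.+1 /\ st (b k.+1) = inr None /\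
    forall t, b k < t < b k.+1 -> st t <> inr None.
  move=> k; rewrite bS; case: ex_minnP => n /andP [H1 /eqP H2] Hmn.
  split=> //; split=> // t /andP [Ht1 Ht2] Hst.
  have := Hmn t; rewrite Ht1 Hst eqxx => /(_ isT); lia.
have bm : forall k, m <= b k.
  elim=> [|k IH] //; apply: leq_trans IH (ltnW (proj1 (Pb k))).
pose ws k := mkseq (fun o => alpha (b k + o)) (b k.+1 - b k).
have Hsum : forall k, size u + \sum_(i < k) size (ws i) = b k.
  elim=> [|k IH]; first by rewrite big_ord0 addn0 size_mkseq.
  rewrite big_ord_recr /= addnA IH size_mkseq subnKC //; exact: ltnW (proj1 (Pb k)).
exists u, ws; split => //.
split; last first.
  split; first by move=> t; rewrite tnth_mkseq.
  by move=> k t; rewrite Hsum tnth_mkseq.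
move=> k.
pose l := b k.+1 - b k.
have Hl : 0 < l by rewrite subn_gt0; exact: (proj1 (Pb k)).
have Hbl : b k + l = b k.+1 by rewrite subnKC //; exact: ltnW (proj1 (Pb k)).
split; last by move=> E; move: (f_equal size E) Hl; rewrite size_mkseq /l /= => ->.
pose view o := if o == 0 then None else (if st (b k + o) is inr x then x else None).
have G2 : forall o, 0 < o < l -> exists p, st (b k + o) = inr (Some p).
  move=> o /andP [Ho1 Ho2].
  have Hmo : m < b k + o by have := bm k; lia.
  have [y Hy] := Hinr (b k + o) Hmo.
  case: y Hy => [p|] Hy; first by exists p.
  case: ((proj2 (proj2 (Pb k))) (b k + o)) => //.
  rewrite -Hbl; apply/andP; split; lia.
have G1 : forall o, o < l -> exists y, st (b k + o).+1 = inr y /\ step2 (view o) (alpha (b k + o)) y.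
  move=> o Ho; case: (posnP o) => [->|Hpos].
    rewrite addn0 /view /=; case E: (st (b k)) => [q|x].
      case: (F2 _ _ E) => [[q' [Hq' _]]|[y [Hy [_ [_ Hs]]]]]; last by exists y.
      by have [y Hy] := Hinr (b k).+1 (bm k); rewrite Hy in Hq'.
    have Ex : x = None.
      move: E; case: (k) => [|kq] E; first by rewrite /= Hqm in E.
      by rewrite (proj1 (proj2 (Pb kq))) in E; case: E.
    rewrite Ex in E.
    by have [y [Hy [_ Hs]]] := F1 _ _ E; exists y.
  have [p Hp] : exists p, st (b k + o) = inr (Some p) by apply: G2; rewrite Hpos Ho.
  have [y [Hy [_ Hs]]] := F1 _ _ Hp; exists y; split => //.
  by rewrite /view (gtn_eqF Hpos) Hp.
have [yl [Hyl Hsl]] : exists y, st (b k + l.-1).+1 = inr y /\ step2 (view l.-1) (alpha (b k + l.-1)) y.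
  by apply: G1; rewrite ltn_predL.
have Hyl' : yl = None.
  by move: Hyl; rewrite -addnS prednK // Hbl (proj1 (proj2 (Pb k))) => -[].
rewrite Hyl' in Hsl.
have [pend /andP [Hpd Hpe]] := existsP Hsl.
have HpendF : pend \in nfa_F B by move: Hpe => /orP [//|/andP [_ ->]].
exists (fun o => if o < l then odflt (nfa_q0 B) (view o) else pend).
split; first by rewrite Hl.
split; last by rewrite size_mkseq ltnn.
move=> i; rewrite tnth_mkseq.
have Hi : i < l by have := ltn_ord i; rewrite {2}size_mkseq.
rewrite Hi; case: (ltnP i.+1 l) => Hi1.
  have [y [Hy Hs]] := G1 i Hi.
  have [p Hp] : exists p, st (b k + i.+1) = inr (Some p) by apply: G2; rewrite Hi1.
  rewrite -addnS Hp in Hy; case: Hy => Hy; rewrite -Hy in Hs.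
  have [p' /andP [Hd Hp']] := existsP Hs.
  rewrite /view /= Hp /=.
  by move: Hp' => /orP [/eqP [->]|/andP [/eqP //]].
have Hil : nat_of_ord i = l.-1 by lia.
by rewrite Hil.
Qed.


End Branch.


Lemma split_l m n (i : 'I_m) : split (lshift n i) = inl i.
Proof. exact: (unsplitK (inl i)). Qed.
Lemma split_r m n (i : 'I_n) : split (rshift m i) = inr i.
Proof. exact: (unsplitK (inr i)). Qed.

Lemma rho_at_zero f : (forall i, f i = 0) -> rho_at f (Fin 0).
Proof. by move=> H; exists 0; rewrite big_ord0. Qed.

Lemma rho_at_one f : f 0 = 1 -> (forall i, 0 < i -> f i = 0) -> rho_at f (Fin 1).
Proof. by move=> H0 H; exists 1; rewrite big_ord1 H0; split. Qed.

Section Union.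
Variables (Sigma : finType) (d1 d2 : nat).
Local Notation D := (d1 + d2 + 1).

Definition Lj (j : 'I_d1) : 'I_D := lshift 1 (lshift d2 j).
Definition Rj (j : 'I_d2) : 'I_D := lshift 1 (rshift d1 j).
Definition tg : 'I_D := rshift (d1 + d2) ord0.
Definition kind (j : 'I_D) : option ('I_d1 + 'I_d2) :=
  match split j with inl j' => Some (split j') | inr _ => None end.

Lemma kindL j : kind (Lj j) = Some (inl j).
Proof. by rewrite /kind /Lj !split_l. Qed.
Lemma kindR j : kind (Rj j) = Some (inr j).
Proof. by rewrite /kind /Rj split_l split_r. Qed.
Lemma kindT : kind tg = None.
Proof. by rewrite /kind /tg split_r. Qed.

Lemma kind_cases j : (exists j1, j = Lj j1) \/ (exists j2, j = Rj j2) \/ j = tg.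
Proof.
case: (split j) (splitK j) => [j'|t] <-.
  case: (split j') (splitK j') => [j1|j2] <-; [left; by exists j1 | right; left; by exists j2].
by right; right; rewrite /tg (ord1 t).
Qed.

Definition uC (C1 : xvec d1 -> Prop) (C2 : xvec d2 -> Prop) (r : xvec D) : Prop :=
  (r tg = Fin 1 /\ C1 (fun j => r (Lj j)) /\ forall j, r (Rj j) = Fin 0) \/
  (r tg = Fin 0 /\ C2 (fun j => r (Rj j)) /\ forall j, r (Lj j) = Fin 0).

Lemma xsl_union C1 C2 : xsemilinear C1 -> xsemilinear C2 -> xsemilinear (uC C1 C2).
Proof.
case=> m1 [l1 [b1 [bs1 H1]]] [m2 [l2 [b2 [bs2 H2]]]].
apply: (@xsl_fin _ _ ('I_m1 + 'I_m2)%type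
  (fun t => match t with inl i => l1 i | inr i => l2 i end)
  (fun t j => match t with
     | inl i => match kind j with Some (inl j1) => b1 i j1 | Some (inr _) => Fin 0 | None => Fin 1 end
     | inr i => match kind j with Some (inr j2) => b2 i j2 | _ => Fin 0 end end)
  (fun t => match t return 'I_(match t with inl i => l1 i | inr i => l2 i end) -> xvec D with
     | inl i => fun k j => match kind j with Some (inl j1) => bs1 i k j1 | _ => Fin 0 end
     | inr i => fun k j => match kind j with Some (inr j2) => bs2 i k j2 | _ => Fin 0 end end)).
move=> r; split.
- case=> [[Ht [/H1 [i [z Hz]] HR]]|[Ht [/H2 [i [z Hz]] HL]]].
  + exists (inl i), z => j /=.
    case: (kind_cases j) => [[j1 ->]|[[j2 ->]|->]]; rewrite ?kindL ?kindR ?kindT.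
    * exact: Hz.
    * by rewrite HR bigx_zero.
    * by rewrite Ht bigx_zero.
  + exists (inr i), z => j /=.
    case: (kind_cases j) => [[j1 ->]|[[j2 ->]|->]]; rewrite ?kindL ?kindR ?kindT.
    * by rewrite HL bigx_zero.
    * exact: Hz.
    * by rewrite Ht bigx_zero.
- case=> [[i|i] [z Hz]].
  + left; split; [|split].
    * by rewrite Hz kindT /= bigx_zero.
    * by apply/H1; exists i, z => j1; rewrite Hz kindL.
    * by move=> j2; rewrite Hz kindR /= bigx_zero.
  + right; split; [|split].
    * by rewrite Hz kindT /= bigx_zero.
    * by apply/H2; exists i, z => j1; rewrite Hz kindR.
    * by move=> j2; rewrite Hz kindL /= bigx_zero.
Qed.

End Union.
Arguments Lj {d1 d2}.
Arguments Rj {d1 d2}.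
Arguments tg {d1 d2}.
Arguments kind {d1 d2}.


Section UnionA.
Variables (Sigma : finType) (d1 d2 : nat) (A1 : LPBA Sigma d1) (A2 : LPBA Sigma d2).
Local Notation D := (d1 + d2 + 1).
Local Notation Q1 := (lp_Q A1).
Local Notation Q2 := (lp_Q A2).
Local Notation SU := (option (Q1 + Q2)).

Definition emb1 (w : vec d1) (tv : nat) : vec D :=
  [ffun j => match kind j with Some (inl j1) => w j1 | Some (inr _) => 0 | None => tv end].
Definition emb2 (w : vec d2) : vec D :=
  [ffun j => match kind j with Some (inr j2) => w j2 | _ => 0 end].

Definition udelta : seq (SU * Sigma * vec D * SU) :=
  [seq (None, e.1.1.2, emb1 e.1.2 1, Some (inl e.2)) | e <- lp_delta A1 & e.1.1.1 == lp_q0 A1]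
  ++ [seq (Some (inl e.1.1.1), e.1.1.2, emb1 e.1.2 0, Some (inl e.2)) | e <- lp_delta A1]
  ++ [seq (None, e.1.1.2, emb2 e.1.2, Some (inr e.2)) | e <- lp_delta A2 & e.1.1.1 == lp_q0 A2]
  ++ [seq (Some (inr e.1.1.1), e.1.1.2, emb2 e.1.2, Some (inr e.2)) | e <- lp_delta A2].

Lemma udeltaP s a w s' : (s, a, w, s') \in udelta ->
  match s, s' with
  | None, Some (inl q') => exists w1, w = emb1 w1 1 /\ (lp_q0 A1, a, w1, q') \in lp_delta A1
  | Some (inl q), Some (inl q') => exists w1, w = emb1 w1 0 /\ (q, a, w1, q') \in lp_delta A1
  | None, Some (inr q') => exists w2, w = emb2 w2 /\ (lp_q0 A2, a, w2, q') \in lp_delta A2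
  | Some (inr q), Some (inr q') => exists w2, w = emb2 w2 /\ (q, a, w2, q') \in lp_delta A2
  | _, _ => False
  end.
Proof.
rewrite !mem_cat => /or4P [] /mapP [[[[q a1] w1] q'] He [-> -> -> ->]] /=.
- by move: He; rewrite mem_filter => /andP [/eqP /= <- He]; exists w1.
- by exists w1.
- by move: He; rewrite mem_filter => /andP [/eqP /= <- He]; exists w1.
- by exists w1.
Qed.

Lemma udelta_i1 q a w q' : (q, a, w, q') \in lp_delta A1 -> q = lp_q0 A1 ->
  (None, a, emb1 w 1, Some (inl q')) \in udelta.
Proof.
move=> H E; subst q; rewrite mem_cat; apply/orP; left; apply/mapP; exists (lp_q0 A1, a, w, q') => //.
by rewrite mem_filter eqxx.
Qed.
Lemma udelta_s1 q a w q' : (q, a, w, q') \in lp_delta A1 ->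
  (Some (inl q), a, emb1 w 0, Some (inl q')) \in udelta.
Proof.
move=> H; rewrite !mem_cat; apply/or4P; apply: Or42; apply/mapP; by exists (q, a, w, q').
Qed.
Lemma udelta_i2 q a w q' : (q, a, w, q') \in lp_delta A2 -> q = lp_q0 A2 ->
  (None, a, emb2 w, Some (inr q')) \in udelta.
Proof.
move=> H E; subst q; rewrite !mem_cat; apply/or4P; apply: Or43; apply/mapP; exists (lp_q0 A2, a, w, q') => //.
by rewrite mem_filter eqxx.
Qed.
Lemma udelta_s2 q a w q' : (q, a, w, q') \in lp_delta A2 ->
  (Some (inr q), a, emb2 w, Some (inr q')) \in udelta.
Proof.
move=> H; rewrite !mem_cat; apply/or4P; apply: Or44; apply/mapP; by exists (q, a, w, q').
Qed.

Definition uF : {set SU} := [set s : SU | match s with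
  | Some (inl q) => q \in lp_F A1 | Some (inr q) => q \in lp_F A2 | None => false end].

Definition AU : LPBA Sigma D :=
  {| lp_Q := SU; lp_q0 := None; lp_delta := udelta; lp_F := uF;
     lp_C := uC (lp_C A1) (lp_C A2); lp_C_sl := xsl_union (lp_C_sl A1) (lp_C_sl A2) |}.

Lemma union_l alpha : lpba_accepts A1 alpha -> lpba_accepts AU alpha.
Proof.
case=> p [v [H0 [Ht [HF [r [Hr HC]]]]]].
exists (fun t => if t is 0 then None else Some (inl (p t))), (fun t => emb1 (v t) (t == 0)).
split => //; split.
  move=> [|t] /=; first exact: udelta_i1 (Ht 0) H0.
  exact: udelta_s1 (Ht t.+1).
split.
  move=> N; have [i [Hi HiF]] := HF N.+1; exists i; split; first by lia.
  by case: i Hi HiF => // i _ HiF; rewrite inE.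
exists (fun j => match kind j with Some (inl j1) => r j1 | Some (inr _) => Fin 0 | None => Fin 1 end).
split.
  apply/is_rhoE => j.
  case: (kind_cases j) => [[j1 ->]|[[j2 ->]|->]]; rewrite ?kindL ?kindR ?kindT.
  - by apply: rho_at_ext (Hr j1) => i; rewrite ffunE kindL.
  - by apply: rho_at_zero => i; rewrite ffunE kindR.
  - by apply: rho_at_one => [|[|i] //]; rewrite ffunE kindT.
left; split; first by rewrite kindT.
split; last by move=> j; rewrite kindR.
suff -> : (fun j => match kind (@Lj d1 d2 j) with Some (inl j1) => r j1 | Some (inr _) => Fin 0 | None => Fin 1 end) = r by [].
by apply functional_extensionality => j; rewrite kindL.
Qed.

Lemma union_r alpha : lpba_accepts A2 alpha -> lpba_accepts AU alpha.
Proof.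
case=> p [v [H0 [Ht [HF [r [Hr HC]]]]]].
exists (fun t => if t is 0 then None else Some (inr (p t))), (fun t => emb2 (v t)).
split => //; split.
  move=> [|t] /=; first exact: udelta_i2 (Ht 0) H0.
  exact: udelta_s2 (Ht t.+1).
split.
  move=> N; have [i [Hi HiF]] := HF N.+1; exists i; split; first by lia.
  by case: i Hi HiF => // i _ HiF; rewrite inE.
exists (fun j => match kind j with Some (inr j2) => r j2 | _ => Fin 0 end).
split.
  apply/is_rhoE => j.
  case: (kind_cases j) => [[j1 ->]|[[j2 ->]|->]]; rewrite ?kindL ?kindR ?kindT.
  - by apply: rho_at_zero => i; rewrite ffunE kindL.
  - by apply: rho_at_ext (Hr j2) => i; rewrite ffunE kindR.
  - by apply: rho_at_zero => i; rewrite ffunE kindT.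
right; split; first by rewrite kindT.
split; last by move=> j; rewrite kindL.
suff -> : (fun j => match kind (@Rj d1 d2 j) with Some (inr j2) => r j2 | _ => Fin 0 end) = r by [].
by apply functional_extensionality => j; rewrite kindR.
Qed.


Lemma union_inv alpha : lpba_accepts AU alpha -> lpba_accepts A1 alpha \/ lpba_accepts A2 alpha.
Proof.
case=> st [lab [H0 [Ht [HF [r [Hr HC]]]]]].
have T0 := udeltaP (Ht 0); rewrite /= H0 in T0.
case E1: (st 1) T0 => [[q1|q1]|] // T0.
- have Hinl : forall t, exists q, st t.+1 = Some (inl q).
    elim=> [|t [q Hq]]; first by exists q1.
    have := udeltaP (Ht t.+1); rewrite /= Hq.
    by case: (st t.+2) => [[q'|q']|] // _; exists q'.
  pose p t := if st t is Some (inl q) then q else lp_q0 A1.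
  pose v t := [ffun j => lab t (Lj j)].
  have Hstep : forall t, (p t, alpha t, v t, p t.+1) \in lp_delta A1 /\ lab t tg = (t == 0).
    case=> [|t].
      case: T0 => w1 [Hw Hd]; rewrite /p H0 E1; split; last by rewrite Hw ffunE kindT.
      suff -> : v 0 = w1 by [].
      by apply/ffunP => j; rewrite ffunE Hw ffunE kindL.
    have [q Hq] := Hinl t; have [q' Hq'] := Hinl t.+1.
    have := udeltaP (Ht t.+1); rewrite /= Hq Hq' => -[w1 [Hw Hd]].
    rewrite /p Hq Hq'; split; last by rewrite Hw ffunE kindT.
    suff -> : v t.+1 = w1 by [].
    by apply/ffunP => j; rewrite ffunE Hw ffunE kindL.
  left; exists p, v; split; first by rewrite /p H0.
  split; first by move=> t; case: (Hstep t).
  split.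
    move=> N; have [i [Hi HiF]] := HF N.+1; exists i; split; first by lia.
    case: i Hi HiF => // i _; have [q Hq] := Hinl i; rewrite /p Hq inE //.
  exists (fun j => r (Lj j)); split.
    by move=> j; apply: rho_at_ext (Hr (Lj j)) => i; rewrite ffunE.
  case: HC => [[_ [H _]]|[Htg _]]; first exact: H.
  have Hz : forall i, 1 <= i -> (fun i => lab i tg) i = 0.
    by move=> [|i] // _ /=; rewrite (proj2 (Hstep i.+1)).
  have := rho_at_uniq (Hr tg) Hz; rewrite Htg big_ord1 /= (proj2 (Hstep 0)) //.
- have Hinr : forall t, exists q, st t.+1 = Some (inr q).
    elim=> [|t [q Hq]]; first by exists q1.
    have := udeltaP (Ht t.+1); rewrite /= Hq.
    by case: (st t.+2) => [[q'|q']|] // _; exists q'.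
  pose p t := if st t is Some (inr q) then q else lp_q0 A2.
  pose v t := [ffun j => lab t (Rj j)].
  have Hstep : forall t, (p t, alpha t, v t, p t.+1) \in lp_delta A2 /\ lab t tg = 0.
    case=> [|t].
      case: T0 => w1 [Hw Hd]; rewrite /p H0 E1; split; last by rewrite Hw ffunE kindT.
      suff -> : v 0 = w1 by [].
      by apply/ffunP => j; rewrite ffunE Hw ffunE kindR.
    have [q Hq] := Hinr t; have [q' Hq'] := Hinr t.+1.
    have := udeltaP (Ht t.+1); rewrite /= Hq Hq' => -[w1 [Hw Hd]].
    rewrite /p Hq Hq'; split; last by rewrite Hw ffunE kindT.
    suff -> : v t.+1 = w1 by [].
    by apply/ffunP => j; rewrite ffunE Hw ffunE kindR.
  right; exists p, v; split; first by rewrite /p H0.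
  split; first by move=> t; case: (Hstep t).
  split.
    move=> N; have [i [Hi HiF]] := HF N.+1; exists i; split; first by lia.
    case: i Hi HiF => // i _; have [q Hq] := Hinr i; rewrite /p Hq inE //.
  exists (fun j => r (Rj j)); split.
    by move=> j; apply: rho_at_ext (Hr (Rj j)) => i; rewrite ffunE.
  case: HC => [[Htg _]|[_ [H _]]]; last exact: H.
  have Hz : forall i, 0 <= i -> (fun i => lab i tg) i = 0.
    by move=> i _ /=; rewrite (proj2 (Hstep i)).
  by have := rho_at_uniq (Hr tg) Hz; rewrite Htg big_ord0.
Qed.

Lemma union_ok alpha : lpba_accepts AU alpha <-> lpba_accepts A1 alpha \/ lpba_accepts A2 alpha.
Proof.
split; first exact: union_inv.
by case; [apply: union_l | apply: union_r].
Qed.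
End UnionA.


Lemma in_UV_mono (Sigma : finType) (U U' V V' : seq Sigma -> Prop) alpha :
  (forall w, U w -> U' w) -> (forall w, V w -> V' w) ->
  in_UVomega U V alpha -> in_UVomega U' V' alpha.
Proof.
move=> HU HV [u [ws [Hu [Hws H]]]]; exists u, ws; split; first exact: HU.
split=> // k; have [H1 H2] := Hws k; split=> //; exact: HV.
Qed.

Lemma branch_rec (Sigma : finType) (U V : seq Sigma -> Prop) :
  parikh_recognizable U -> regular V -> lpba_recognizable (in_UVomega U V).
Proof.
case=> d [A HA] [B HB]; exists d, (LB A B) => alpha; split => H.
- apply: branch1; move: H; apply: in_UV_mono => w; [exact: (proj1 (HA w)) | exact: (proj1 (HB w))].
- move: (branch2 H); apply: in_UV_mono => w; [exact: (proj2 (HA w)) | exact: (proj2 (HB w))].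
Qed.

Lemma lpba_ext (Sigma : finType) (L L' : (nat -> Sigma) -> Prop) :
  (forall a, L a <-> L' a) -> lpba_recognizable L -> lpba_recognizable L'.
Proof.
move=> E [d [A H]]; exists d, A => a; split => Ha.
- by apply/H/E.
- by apply/E/H.
Qed.

Lemma lpba_union (Sigma : finType) (L1 L2 : (nat -> Sigma) -> Prop) :
  lpba_recognizable L1 -> lpba_recognizable L2 ->
  lpba_recognizable (fun a => L1 a \/ L2 a).
Proof.
case=> d1 [A1 H1] [d2 [A2 H2]]; exists (d1 + d2 + 1), (AU A1 A2) => a.
rewrite union_ok; split.
- by case=> [/H1|/H2]; [left|right].
- by case=> [/H1|/H2]; [left|right].
Qed.

Definition AE (Sigma : finType) : LPBA Sigma 0 :=
  {| lp_Q := unit; lp_q0 := tt; lp_delta := [::]; lp_F := set0;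
     lp_C := fun _ => True; lp_C_sl := xsl_true |}.

Theorem lemma5 (Sigma : finType) (n : nat) (U V : 'I_n -> seq Sigma -> Prop) :
  (forall i, parikh_recognizable (U i)) ->
  (forall i, regular (V i)) ->
  lpba_recognizable (fun alpha : nat -> Sigma =>
    exists i : 'I_n, in_UVomega (U i) (V i) alpha).
Proof.
elim: n U V => [|n IH] U V HU HV.
  exists 0, (AE Sigma) => alpha; split.
    by case=> -[m Hm].
  by case=> p [v [_ [Ht _]]]; have := Ht 0.
have := lpba_union (branch_rec (HU ord0) (HV ord0))
  (IH (fun i => U (lift ord0 i)) (fun i => V (lift ord0 i)) (fun i => HU _) (fun i => HV _)).
apply: lpba_ext => alpha; split.
- by case=> [H|[i H]]; [exists ord0 | exists (lift ord0 i)].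
- case=> i; case: (unliftP ord0 i) => [j ->|->] H; [right; by exists j | by left].
Qed.
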